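(* Let $N\ge 1$ and $-\infty<a_i\le b_i<\infty$ with $r_i=(b_i-a_i)/2>0$ for all $i$; set $m_i=(a_i+b_i)/2$, $\Theta=\prod_{i=1}^N[a_i,b_i]$, $T(y)=\sum_{i=1}^N y_i$. Fix a sampling design $p$ with inclusion probabilities $\pi_i=\mathbb P_p(i\in S)>0$ for all $i$, and let $\pi_{ij}=\mathbb P_p(i\in S,\ j\in S)$, $\Delta_{ij}=\pi_{ij}-\pi_i\pi_j$, and $D_\pi=\sum_{i=1}^N r_i^2\frac{1-\pi_i}{\pi_i}$. Let $\widehat T$ be the estimator $\widehat T(y_S)=\sum_{i=1}^N m_i+\sum_{i\in S}\frac{y_i-m_i}{\pi_i}$. The following are equivalent: (i) there exists an unbiased estimator $\delta$ with $\sup_{y\in\Theta}R(\delta,p;y)=D_\pi$; (ii) $\sup_{y\in\Theta}R(\widehat T,p;y)=D_\pi$; (iii) $\Delta_{ij}=0$ for every $i\ne j$.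
   Context: A sampling design is a probability distribution $p$ on the subsets $s\subseteq\{1,\dots,N\}$; $S$ denotes the random sample drawn from $p$, $\mathbb P_p$ and $\mathbb E_p$ denote probability and expectation with respect to $p$. An estimator $\delta$ is a collection of measurable functions $\delta_s:\Theta_s\to\mathbb R$, one for each subset $s$, where $\Theta_s=\prod_{i\in s}[a_i,b_i]$; for $y\in\Theta$ write $y_s=(y_i)_{i\in s}$. The estimator is unbiased if $\mathbb E_p[\delta_S(y_S)]=T(y)$ for all $y\in\Theta$. The risk is $R(\delta,p;y)=\mathbb E_p[(\delta_S(y_S)-T(y))^2]$. *)

(* Defs.v *)
From HB Require Import structures.
From mathcomp Require Import all_boot all_order all_algebra.
From mathcomp Require Import all_classical all_reals all_analysis.
Set Implicit Arguments. Unset Strict Implicit. Unset Printing Implicit Defensive.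
Import Order.TTheory GRing.Theory Num.Theory.
Local Open Scope ring_scope.

(* Population units are indexed by 'I_N (i.e. {0,..,N-1} instead of {1,..,N}).
   A sample is a subset s : {set 'I_N}; a sampling design is a probability
   (mass function) on {set 'I_N}. *)
Definition is_design (R : realType) (N : nat) (p : {ffun {set 'I_N} -> R}) : Prop :=
  (forall s, 0 <= p s) /\ \sum_(s : {set 'I_N}) p s = 1.

Definition incl1 (R : realType) (N : nat) (p : {ffun {set 'I_N} -> R}) (i : 'I_N) : R :=
  \sum_(s : {set 'I_N} | i \in s) p s.
Definition incl2 (R : realType) (N : nat) (p : {ffun {set 'I_N} -> R}) (i j : 'I_N) : R :=
  \sum_(s : {set 'I_N} | (i \in s) && (j \in s)) p s.

Definition Theta (R : realType) (N : nat) (a b : 'I_N -> R) : set ('I_N -> R) :=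
  [set y | forall i, a i <= y i <= b i].
Definition Theta_tuple (R : realType) (N : nat) (a b : 'I_N -> R) : set (N.-tuple R) :=
  [set t | forall i, a i <= tnth t i <= b i].

Definition total (R : realType) (N : nat) (y : 'I_N -> R) : R := \sum_i y i.

(* An estimator: for each sample s a function delta s of y, which only depends
   on y_s = (y_i)_{i in s}, and which is measurable on Theta (for the product
   Borel sigma-algebra on R^N, realised on N.-tuples). *)
Definition is_estimator (R : realType) (N : nat) (a b : 'I_N -> R)
    (delta : {set 'I_N} -> ('I_N -> R) -> R) : Prop :=
  (forall (s : {set 'I_N}) (y y' : 'I_N -> R), (forall i, i \in s -> y i = y' i) ->
      delta s y = delta s y') /\
  (forall s : {set 'I_N}, measurable_fun (Theta_tuple a b) (fun t : N.-tuple R => delta s (tnth t))).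

Definition expect (R : realType) (N : nat) (p : {ffun {set 'I_N} -> R})
    (delta : {set 'I_N} -> ('I_N -> R) -> R) (y : 'I_N -> R) : R :=
  \sum_(s : {set 'I_N}) p s * delta s y.

Definition unbiased (R : realType) (N : nat) (a b : 'I_N -> R) (p : {ffun {set 'I_N} -> R})
    (delta : {set 'I_N} -> ('I_N -> R) -> R) : Prop :=
  forall y, Theta a b y -> expect p delta y = total y.

Definition risk (R : realType) (N : nat) (p : {ffun {set 'I_N} -> R})
    (delta : {set 'I_N} -> ('I_N -> R) -> R) (y : 'I_N -> R) : R :=
  \sum_(s : {set 'I_N}) p s * (delta s y - total y) ^+ 2.

Definition sup_risk (R : realType) (N : nat) (a b : 'I_N -> R) (p : {ffun {set 'I_N} -> R})
    (delta : {set 'I_N} -> ('I_N -> R) -> R) : \bar R :=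
  ereal_sup [set (risk p delta y)%:E | y in Theta a b].

Definition midpoint (R : realType) (N : nat) (a b : 'I_N -> R) (i : 'I_N) : R := (a i + b i) / 2.
Definition half_width (R : realType) (N : nat) (a b : 'I_N -> R) (i : 'I_N) : R := (b i - a i) / 2.

Definition D_pi (R : realType) (N : nat) (a b : 'I_N -> R) (p : {ffun {set 'I_N} -> R}) : R :=
  \sum_i (half_width a b i) ^+ 2 * (1 - incl1 p i) / incl1 p i.

Definition That (R : realType) (N : nat) (a b : 'I_N -> R) (p : {ffun {set 'I_N} -> R})
    (s : {set 'I_N}) (y : 'I_N -> R) : R :=
  \sum_i midpoint a b i + \sum_(i in s) (y i - midpoint a b i) / incl1 p i.

(* Main.v *)
Require Import Defs.
From HB Require Import structures.
From mathcomp Require Import all_boot all_order all_algebra.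
From mathcomp Require Import all_classical all_reals all_analysis.
From mathcomp Require Import ring lra.
Import Order.TTheory GRing.Theory Num.Theory.
Local Open Scope ring_scope.

Ltac simpnum := rewrite /= ?(mulr1n, mulr0n, mul0r, mulr0, add0r, addr0, mulr1, mul1r).

Definition sg (R : realType) {N} (A : {set 'I_N}) (i : 'I_N) : R :=
  if i \in A then 1 else -1.
Definition tog {N} (i : 'I_N) (A : {set 'I_N}) : {set 'I_N} :=
  if i \in A then A :\ i else i |: A.

Lemma togK N (i : 'I_N) : involutive (tog i).
Proof.
move=> A; rewrite /tog; case: (boolP (i \in A)) => iA.
  by rewrite finset.setD11 finset.setD1K.
by rewrite finset.setU11 finset.setU1K.
Qed.

Lemma sg_tog_same (R : realType) N (i : 'I_N) A : sg R (tog i A) i = - sg R A i.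
Proof.
rewrite /sg /tog; case: (boolP (i \in A)) => iA; first by rewrite finset.setD11.
by rewrite finset.setU11 opprK.
Qed.

Lemma sg_tog_other (R : realType) N (i k : 'I_N) A : k != i -> sg R (tog i A) k = sg R A k.
Proof.
move=> ki; rewrite /sg /tog; case: (boolP (i \in A)) => iA.
  by rewrite finset.in_setD1 ki.
by rewrite finset.in_setU1 (negbTE ki).
Qed.

Lemma sg_sq (R : realType) N (A : {set 'I_N}) i : sg R A i * sg R A i = 1.
Proof. by rewrite /sg; case: ifP => _; rewrite ?mulr1 ?mulrNN ?mulr1. Qed.

Lemma flip0 (R : realType) N (i : 'I_N) (F : {set 'I_N} -> R) :
  (forall A, F (tog i A) = F A) -> \sum_A sg R A i * F A = 0.
Proof.
move=> HF; set S := \sum_A _.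
have h : S = - S.
  rewrite {1}/S (reindex_inj (inv_inj (@togK N i))) /= -sumrN.
  by apply: eq_bigr => A _; rewrite HF sg_tog_same mulNr.
lra.
Qed.

Definition Mc (R : realType) N : R := \sum_(A : {set 'I_N}) 1.

Lemma Mc_gt0 (R : realType) N : 0 < Mc R N.
Proof.
rewrite /Mc (bigD1 (finset.set0 : {set 'I_N})) //= ltr_pwDl ?ltr01 //.
by apply: sumr_ge0 => *; exact: ler01.
Qed.

Lemma O2 (R : realType) N (k l : 'I_N) :
  \sum_A sg R A k * sg R A l = (k == l)%:R * Mc R N.
Proof.
case: eqVneq => [<-|kl].
  by rewrite mul1r /Mc; apply: eq_bigr => A _; rewrite sg_sq.
rewrite mul0r; apply: flip0 => A; rewrite sg_tog_other // eq_sym; exact: kl.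
Qed.

Lemma O4 (R : realType) N (i j k l : 'I_N) : i != j ->
  \sum_A sg R A k * sg R A l * (sg R A i * sg R A j) =
  ((k == i)%:R * (l == j)%:R + (k == j)%:R * (l == i)%:R) * Mc R N.
Proof.
move=> ij.
case: (eqVneq k l) => [<-|kl].
  under eq_bigr do rewrite sg_sq mul1r.
  rewrite O2 (negbTE ij).
  case: (eqVneq k i) => [ki|ki].
    by subst k; rewrite ?eqxx (negbTE ij) !(mul0r, mulr0, add0r, addr0).
  by rewrite !(mul0r, mulr0, add0r, addr0).
case: (eqVneq k i) => [ki|ki].
  subst k; case: (eqVneq l j) => [lj|lj].
    subst l; rewrite (negbTE ij); simpnum; rewrite /Mc.
    apply: eq_bigr => A _.
    have -> : sg R A i * sg R A j * (sg R A i * sg R A j) =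
      (sg R A i * sg R A i) * (sg R A j * sg R A j) by ring.
    by rewrite !sg_sq mulr1.
  rewrite (negbTE ij); simpnum.
  have -> : \sum_A sg R A i * sg R A l * (sg R A i * sg R A j) =
            \sum_A sg R A l * (sg R A i * sg R A i * sg R A j) by
    apply: eq_bigr => A _; ring.
  by apply: flip0 => A; rewrite !sg_tog_other // eq_sym.
case: (eqVneq k j) => [kj|kj].
  subst k; case: (eqVneq l i) => [li|li].
    subst l; simpnum; rewrite /Mc.
    apply: eq_bigr => A _.
    have -> : sg R A j * sg R A i * (sg R A i * sg R A j) =
      (sg R A i * sg R A i) * (sg R A j * sg R A j) by ring.
    by rewrite !sg_sq mulr1.
  simpnum.
  have -> : \sum_A sg R A j * sg R A l * (sg R A i * sg R A j) =
            \sum_A sg R A l * (sg R A j * sg R A i * sg R A j) by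
    apply: eq_bigr => A _; ring.
  by apply: flip0 => A; rewrite !sg_tog_other // eq_sym.
simpnum.
have -> : \sum_A sg R A k * sg R A l * (sg R A i * sg R A j) =
            \sum_A sg R A k * (sg R A l * sg R A i * sg R A j) by
    apply: eq_bigr => A _; ring.
by apply: flip0 => A; rewrite !sg_tog_other // eq_sym.
Qed.

Lemma sq_sum (R : realType) N (x : 'I_N -> R) :
  (\sum_k x k) ^+ 2 = \sum_k \sum_l x k * x l.
Proof. by rewrite expr2 mulr_suml; apply: eq_bigr => k _; rewrite mulr_sumr. Qed.

Lemma sum_delta (R : realType) N (F : 'I_N -> R) j :
  \sum_l F l * (l == j)%:R = F j.
Proof.
rewrite (bigD1 j) //= eqxx mulr1 big1 ?addr0 // => l /negbTE ->.
by rewrite mulr0.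
Qed.

Lemma L1 (R : realType) N (v : 'I_N -> R) :
  \sum_A (\sum_k v k * sg R A k) ^+ 2 = Mc R N * \sum_k v k ^+ 2.
Proof.
under eq_bigr do rewrite sq_sum.
rewrite exchange_big mulr_sumr /=; apply: eq_bigr => k _.
rewrite exchange_big /=.
transitivity (\sum_l (v l * v k * Mc R N) * (l == k)%:R).
  apply: eq_bigr => l _.
  have h := O2 R N k l.
  rewrite [(l == k)]eq_sym.
  have -> : v l * v k * Mc R N * (k == l)%:R = v k * v l * ((k == l)%:R * Mc R N) by ring.
  rewrite -h mulr_sumr; apply: eq_bigr => A _; ring.
by rewrite sum_delta; ring.
Qed.

Lemma dd (R : realType) N (F : 'I_N -> 'I_N -> R) i j :
  \sum_k \sum_l F k l * ((k == i)%:R * (l == j)%:R + (k == j)%:R * (l == i)%:R)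
  = F i j + F j i.
Proof.
transitivity (\sum_k (\sum_l F k l * (l == j)%:R) * (k == i)%:R +
              \sum_k (\sum_l F k l * (l == i)%:R) * (k == j)%:R).
  rewrite -big_split /=; apply: eq_bigr => k _; rewrite !mulr_suml -big_split /=.
  by apply: eq_bigr => l _; ring.
under eq_bigr do rewrite sum_delta.
under [X in _ + X]eq_bigr do rewrite sum_delta.
by rewrite (sum_delta _ _ (fun k => F k j)) (sum_delta _ _ (fun k => F k i)).
Qed.

Lemma L2 (R : realType) N (v : 'I_N -> R) i j : i != j ->
  \sum_A (\sum_k v k * sg R A k) ^+ 2 * (sg R A i * sg R A j)
  = Mc R N * (v i * v j + v j * v i).
Proof.
move=> ij.
under eq_bigr do rewrite sq_sum mulr_suml.
rewrite exchange_big /=.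
transitivity (\sum_k \sum_l (v k * v l * Mc R N) *
   ((k == i)%:R * (l == j)%:R + (k == j)%:R * (l == i)%:R)).
  apply: eq_bigr => k _.
  under eq_bigr do rewrite mulr_suml.
  rewrite exchange_big /=; apply: eq_bigr => l _.
  rewrite -mulrA [Mc R N * _]mulrC -(O4 R N i j k l ij) mulr_sumr.
  by apply: eq_bigr => A _; ring.
by rewrite dd; ring.
Qed.

Definition wt {R : realType} {N} (p : {ffun {set 'I_N} -> R}) (s : {set 'I_N}) (i : 'I_N) : R :=
  (i \in s)%:R / incl1 p i - 1.

Lemma That_err {R : realType} {N : nat} (a b : 'I_N -> R) p s y :
  That a b p s y - Defs.total y = \sum_i (y i - midpoint a b i) * wt p s i.
Proof.
rewrite /That /Defs.total.
have -> : \sum_i (y i - midpoint a b i) * wt p s i =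
  \sum_i (if i \in s then (y i - midpoint a b i) / incl1 p i else 0) -
  \sum_i (y i - midpoint a b i).
  rewrite -sumrB; apply: eq_bigr => i _; rewrite /wt.
  by case: (i \in s); simpnum; ring.
rewrite sumrB -big_mkcond /=; ring.
Qed.

Lemma E1 {R : realType} {N : nat} (p : {ffun {set 'I_N} -> R}) i :
  \sum_s p s * (i \in s)%:R = incl1 p i.
Proof.
by rewrite /incl1 [RHS]big_mkcond; apply: eq_bigr => s _; case: (i \in s); simpnum.
Qed.

Lemma E2 {R : realType} {N : nat} (p : {ffun {set 'I_N} -> R}) k l :
  \sum_s p s * ((k \in s)%:R * (l \in s)%:R) = incl2 p k l.
Proof.
rewrite /incl2 [RHS]big_mkcond; apply: eq_bigr => s _.
by case: (k \in s); case: (l \in s); simpnum.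
Qed.

Lemma incl2_diag {R : realType} {N : nat} (p : {ffun {set 'I_N} -> R}) k :
  incl2 p k k = incl1 p k.
Proof. by rewrite /incl2; apply: eq_bigl => s; rewrite andbb. Qed.

Lemma Kw {R : realType} {N : nat} (p : {ffun {set 'I_N} -> R}) k l :
  is_design p -> incl1 p k != 0 -> incl1 p l != 0 ->
  \sum_s p s * (wt p s k * wt p s l) = incl2 p k l / (incl1 p k * incl1 p l) - 1.
Proof.
move=> [_ Hs] hk hl.
transitivity (\sum_s (p s * ((k \in s)%:R * (l \in s)%:R) * ((incl1 p k)^-1 * (incl1 p l)^-1)
   - p s * (k \in s)%:R * (incl1 p k)^-1 - p s * (l \in s)%:R * (incl1 p l)^-1 + p s)).
  by apply: eq_bigr => s _; rewrite /wt; ring.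
rewrite big_split /= !sumrB -!mulr_suml E2 E1 E1 Hs.
by field; apply/andP; split.
Qed.

Lemma Ew {R : realType} {N : nat} (p : {ffun {set 'I_N} -> R}) k :
  is_design p -> incl1 p k != 0 -> \sum_s p s * wt p s k = 0.
Proof.
move=> [_ Hs] hk.
transitivity (\sum_s (p s * (k \in s)%:R * (incl1 p k)^-1 - p s)).
  by apply: eq_bigr => s _; rewrite /wt; ring.
by rewrite sumrB -mulr_suml E1 Hs mulfV // subrr.
Qed.

Lemma That_unb {R : realType} {N : nat} (a b : 'I_N -> R) p y :
  is_design p -> (forall i, 0 < incl1 p i) -> expect p (That a b p) y = Defs.total y.
Proof.
move=> Hd Hpi; have Hs := Hd.2.
rewrite /expect.
transitivity (\sum_s (p s * Defs.total y +
   \sum_i (y i - midpoint a b i) * (p s * wt p s i))).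
  apply: eq_bigr => s _.
  have := That_err a b p s y => h.
  have -> : That a b p s y = Defs.total y + (That a b p s y - Defs.total y) by ring.
  rewrite h mulrDr mulr_sumr; congr (_ + _); apply: eq_bigr => i _; ring.
rewrite big_split /= -mulr_suml Hs mul1r exchange_big /= big1 ?addr0 // => i _.
by rewrite -mulr_sumr Ew ?mulr0 // gt_eqF.
Qed.

Lemma That_loc {R : realType} {N : nat} (a b : 'I_N -> R) p (s : {set 'I_N}) (y y' : 'I_N -> R) :
  (forall i, i \in s -> y i = y' i) -> That a b p s y = That a b p s y'.
Proof.
move=> H; rewrite /That; congr (_ + _); apply: eq_bigr => i Hi; by rewrite H.
Qed.

Lemma risk_That {R : realType} {N : nat} (a b : 'I_N -> R) p y :
  risk p (That a b p) y = \sum_k \sum_l (y k - midpoint a b k) * (y l - midpoint a b l) *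
      \sum_s p s * (wt p s k * wt p s l).
Proof.
rewrite /risk.
under eq_bigr do rewrite That_err sq_sum mulr_sumr.
rewrite exchange_big /=; apply: eq_bigr => k _.
under eq_bigr do rewrite mulr_sumr.
rewrite exchange_big /=; apply: eq_bigr => l _.
rewrite mulr_sumr; apply: eq_bigr => s _; ring.
Qed.

Lemma incl1_le1 {R : realType} {N : nat} (p : {ffun {set 'I_N} -> R}) i :
  is_design p -> incl1 p i <= 1.
Proof.
move=> [H0 Hs]; rewrite -Hs /incl1 big_mkcond /=.
by apply: ler_sum => s _; case: (i \in s).
Qed.

Lemma That_est {R : realType} {N : nat} (a b : 'I_N -> R) p :
  is_estimator a b (That a b p).
Proof.
split; first by move=> s y y' H; apply: That_loc.
move=> s.
apply: (measurable_funS measurableT (@subsetT _ _)).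
rewrite /That.
apply: measurable_realfun.measurable_funD; first exact: measurable_cst.
under eq_fun do rewrite big_mkcond /=.
apply: measurable_sum => i.
case: (i \in s); last exact: measurable_cst.
apply: measurable_realfun.measurable_funM; last exact: measurable_cst.
apply: measurable_realfun.measurable_funB; last exact: measurable_cst.
exact: measurable_tnth.
Qed.

Lemma iii_ii {R : realType} {N : nat} (a b : 'I_N -> R) p :
  (forall i, a i <= b i) -> is_design p -> (forall i, 0 < incl1 p i) ->
  (forall i j : 'I_N, i != j -> incl2 p i j - incl1 p i * incl1 p j = 0) ->
  sup_risk a b p (That a b p) = (D_pi a b p)%:E.
Proof.
move=> Hab Hd Hpi H.
have Hn k : incl1 p k != 0 by rewrite gt_eqF.
have K0 k l : k != l -> \sum_s p s * (wt p s k * wt p s l) = 0.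
  move=> kl; rewrite Kw // .
  have h := H k l kl.
  have -> : incl2 p k l = incl1 p k * incl1 p l by lra.
  by rewrite mulfV ?subrr // mulf_neq0.
have Kd k : \sum_s p s * (wt p s k * wt p s k) = (1 - incl1 p k) / incl1 p k.
  by rewrite Kw // incl2_diag; field.
have rT y : risk p (That a b p) y =
    \sum_k (y k - midpoint a b k) ^+ 2 * ((1 - incl1 p k) / incl1 p k).
  rewrite risk_That; apply: eq_bigr => k _.
  rewrite (bigD1 k) //= [X in _ + X]big1 ?addr0; first by rewrite Kd expr2.
  by move=> l lk; rewrite K0 ?mulr0 // eq_sym.
apply/le_anti/andP; split.
  apply: ge_ereal_sup => x [y Hy <-]; rewrite lee_fin rT /D_pi.
  apply: ler_sum => k _.
  have c0 : 0 <= (1 - incl1 p k) / incl1 p k.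
    by apply: divr_ge0; [rewrite subr_ge0 incl1_le1 | exact: ltW].
  rewrite -mulrA; apply: ler_wpM2r => //.
  have /andP[h1 h2] := Hy k.
  rewrite /midpoint /half_width; nra.
apply: ereal_sup_ubound; exists b.
  by move=> k; rewrite Hab lexx.
rewrite rT /D_pi; congr (_%:E); apply: eq_bigr => k _.
by rewrite /midpoint /half_width mulrA; congr (_ ^+ 2 * _ / _); field.
Qed.

Lemma i_iii {R : realType} {N : nat} (a b : 'I_N -> R) p :
  (forall i, 0 < half_width a b i) -> is_design p -> (forall i, 0 < incl1 p i) ->
  (exists delta, is_estimator a b delta /\ unbiased a b p delta /\
          sup_risk a b p delta = (D_pi a b p)%:E) ->
  forall i j : 'I_N, i != j -> incl2 p i j - incl1 p i * incl1 p j = 0.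
Proof.
move=> Hr Hd Hpi [delta [[Hloc _] [Hunb Hsup]]] i j ij.
have Hn k : incl1 p k != 0 by rewrite gt_eqF.
set D := D_pi a b p.
pose vert (A : {set 'I_N}) : 'I_N -> R :=
  fun k => midpoint a b k + half_width a b k * sg R A k.
have Hvert A : Theta a b (vert A).
  move=> k; rewrite /vert /sg /midpoint; have := Hr k; rewrite /half_width.
  by case: (k \in A) => h; apply/andP; split; lra.
have Hle A : risk p delta (vert A) <= D.
  rewrite -lee_fin -Hsup; apply: ereal_sup_ubound; by exists (vert A).
pose e s A := That a b p s (vert A) - Defs.total (vert A).
pose d s A := delta s (vert A) - That a b p s (vert A).
have He s A : e s A = \sum_k (half_width a b k * wt p s k) * sg R A k.
  by rewrite /e That_err; apply: eq_bigr => k _; rewrite /vert; ring.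
have Hud A : \sum_s p s * d s A = 0.
  have h1 := Hunb _ (Hvert A); rewrite /expect in h1.
  have h2 := That_unb a b p (vert A) Hd Hpi; rewrite /expect in h2.
  rewrite /d; under eq_bigr do rewrite mulrBr.
  by rewrite sumrB h1 h2 subrr.
have Hrisk A : risk p delta (vert A) = \sum_s p s * e s A ^+ 2 +
    2 * \sum_s p s * (d s A * e s A) + \sum_s p s * d s A ^+ 2.
  rewrite /risk mulr_sumr -!big_split /=; apply: eq_bigr => s _.
  rewrite /d /e; ring.
have HsumE : \sum_A \sum_s p s * e s A ^+ 2 = Mc R N * D.
  rewrite exchange_big /=.
  transitivity (\sum_s p s * (Mc R N * \sum_k (half_width a b k * wt p s k) ^+ 2)).
    apply: eq_bigr => s _; rewrite -mulr_sumr; congr (_ * _).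
    by rewrite -L1; apply: eq_bigr => A _; rewrite He.
  rewrite /D /D_pi mulr_sumr.
  transitivity (\sum_s \sum_k Mc R N * (half_width a b k ^+ 2 * (p s * (wt p s k * wt p s k)))).
    by apply: eq_bigr => s _; rewrite !mulr_sumr; apply: eq_bigr => k _; ring.
  rewrite exchange_big /=; apply: eq_bigr => k _.
  rewrite -!mulr_sumr Kw // incl2_diag; field; exact: Hn.
have Xz (s : {set 'I_N}) k : k \notin s -> \sum_A sg R A k * d s A = 0.
  move=> ks; apply: flip0 => A; rewrite /d.
  have ag : forall l, l \in s -> vert (tog k A) l = vert A l.
    move=> l ls; rewrite /vert sg_tog_other //.
    by apply: contraNneq ks => <-.
  by rewrite (Hloc s _ _ ag) (That_loc a b p s _ _ ag).
have Xw (s : {set 'I_N}) k : wt p s k * \sum_A sg R A k * d s A =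
              ((incl1 p k)^-1 - 1) * \sum_A sg R A k * d s A.
  case: (boolP (k \in s)) => ks; first by rewrite /wt ks mul1r.
  by rewrite Xz // !mulr0.
have HsumX : \sum_A \sum_s p s * (d s A * e s A) = 0.
  rewrite exchange_big /=.
  transitivity (\sum_s \sum_k p s * half_width a b k *
       (wt p s k * \sum_A sg R A k * d s A)).
    apply: eq_bigr => s _.
    under eq_bigr do rewrite He mulr_sumr mulr_sumr.
    rewrite exchange_big /=; apply: eq_bigr => k _.
    rewrite [in RHS]mulr_sumr [in RHS]mulr_sumr; apply: eq_bigr => A _; ring.
  under eq_bigr do under eq_bigr do rewrite Xw.
  rewrite exchange_big /=; apply: big1 => k _.
  transitivity (\sum_s \sum_A half_width a b k * ((incl1 p k)^-1 - 1) *
       (sg R A k * (p s * d s A))).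
    apply: eq_bigr => s _; rewrite mulrA mulr_sumr; apply: eq_bigr => A _; ring.
  rewrite exchange_big /=; apply: big1 => A _.
  by rewrite -mulr_sumr -mulr_sumr Hud !mulr0.
have HsumD : \sum_A \sum_s p s * d s A ^+ 2 <= 0.
  have : \sum_A risk p delta (vert A) <= Mc R N * D.
    rewrite /Mc mulr_suml; apply: ler_sum => A _; rewrite mul1r; exact: Hle.
  under eq_bigr do rewrite Hrisk.
  rewrite !big_split /= -mulr_sumr HsumE HsumX; lra.
have Hd0 (A s : {set 'I_N}) : p s * d s A = 0.
  have n1 : forall (A' s' : {set 'I_N}), true -> 0 <= p s' * d s' A' ^+ 2.
    by move=> A' s' _; apply: mulr_ge0; [exact: Hd.1 | exact: sqr_ge0].
  have n2 : forall (A' : {set 'I_N}), true -> 0 <= \sum_s p s * d s A' ^+ 2.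
    by move=> A' _; apply: sumr_ge0 => s' _; exact: n1.
  have h1 : \sum_A \sum_s p s * d s A ^+ 2 = 0.
    apply/le_anti/andP; split => //.
    by apply: sumr_ge0 => A' _; exact: n2.
  have h2 := psumr_eq0P n2 h1 (i:=A) isT.
  have h3 := psumr_eq0P (n1 A) h2 (i:=s) isT.
  move/eqP: h3; rewrite mulf_eq0 expf_eq0 /= => /orP [/eqP -> | /eqP ->].
    by rewrite mul0r.
  by rewrite mulr0.
pose RT A := \sum_s p s * e s A ^+ 2.
have HRT A : RT A <= D.
  have := Hle A; rewrite Hrisk.
  rewrite [X in 2 * X]big1; last by move=> s _; rewrite mulrA Hd0 mul0r.
  rewrite [X in _ + X <= _]big1; last by move=> s _; rewrite expr2 mulrA Hd0 mul0r.
  by rewrite mulr0 !addr0.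
have SD : \sum_(A : {set 'I_N}) D = Mc R N * D.
  by rewrite /Mc mulr_suml; apply: eq_bigr => A _; rewrite mul1r.
have HRTeq A : RT A = D.
  have h1 : \sum_A (D - RT A) = 0 by rewrite sumrB SD HsumE subrr.
  have n3 : forall A0 : {set 'I_N}, true -> 0 <= D - RT A0 by move=> A0 _; rewrite subr_ge0.
  have h2 := psumr_eq0P n3 h1 (i:=A) isT.
  lra.
have F1 : \sum_A RT A * (sg R A i * sg R A j) = 0.
  under eq_bigr do rewrite HRTeq.
  by rewrite -mulr_sumr O2 (negbTE ij) mul0r mulr0.
have F2 : \sum_A RT A * (sg R A i * sg R A j) =
    Mc R N * (2 * (half_width a b i * half_width a b j)) *
    \sum_s p s * (wt p s i * wt p s j).
  transitivity (\sum_s p s * \sum_A e s A ^+ 2 * (sg R A i * sg R A j)).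
    rewrite /RT; under eq_bigr do rewrite mulr_suml.
    rewrite exchange_big /=; apply: eq_bigr => s _.
    by rewrite mulr_sumr; apply: eq_bigr => A _; ring.
  rewrite mulr_sumr; apply: eq_bigr => s _.
  under eq_bigr do rewrite He.
  rewrite (L2 R N (fun k => half_width a b k * wt p s k) i j ij); ring.
have C0 : Mc R N * (2 * (half_width a b i * half_width a b j)) != 0.
  apply: mulf_neq0; first by rewrite gt_eqF // Mc_gt0.
  apply: mulf_neq0; first by rewrite pnatr_eq0.
  by apply: mulf_neq0; rewrite gt_eqF.
move: F2; rewrite F1 Kw // => /eqP; rewrite eq_sym mulf_eq0 (negbTE C0) /= => /eqP h.
have -> : incl2 p i j - incl1 p i * incl1 p j =
  (incl2 p i j / (incl1 p i * incl1 p j) - 1) * (incl1 p i * incl1 p j).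
  by field; apply/andP; split.
by rewrite h mul0r.
Qed.

Theorem theorem2 (R : realType) (N : nat) (a b : 'I_N -> R)
    (p : {ffun {set 'I_N} -> R}) :
  (0 < N)%N ->
  (forall i : 'I_N, a i <= b i) ->
  (forall i : 'I_N, 0 < half_width a b i) ->
  is_design p ->
  (forall i : 'I_N, 0 < incl1 p i) ->
  [/\ ((exists delta, is_estimator a b delta /\ unbiased a b p delta /\
          sup_risk a b p delta = (D_pi a b p)%:E)
       <-> sup_risk a b p (That a b p) = (D_pi a b p)%:E),
      (sup_risk a b p (That a b p) = (D_pi a b p)%:E
       <-> (forall i j : 'I_N, i != j -> incl2 p i j - incl1 p i * incl1 p j = 0)) &
      ((exists delta, is_estimator a b delta /\ unbiased a b p delta /\
          sup_risk a b p delta = (D_pi a b p)%:E)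
       <-> (forall i j : 'I_N, i != j -> incl2 p i j - incl1 p i * incl1 p j = 0))].
Proof.
move=> HN Hab Hr Hd Hpi.
have i3 := i_iii a b p Hr Hd Hpi.
have i32 := iii_ii a b p Hab Hd Hpi.
have i21 : sup_risk a b p (That a b p) = (D_pi a b p)%:E ->
    exists delta, is_estimator a b delta /\ unbiased a b p delta /\
          sup_risk a b p delta = (D_pi a b p)%:E.
  move=> h; exists (That a b p); split; first exact: That_est.
  by split => // y _; apply: That_unb.
split; split.
- by move=> hi; apply: i32; apply: i3.
- exact: i21.
- by move=> h; apply: i3; apply: i21.
- exact: i32.
- exact: i3.
- by move=> h; apply: i21; apply: i32.
Qed.
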